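(* Suppose $\mathcal Q$ is vertically unbounded, $m=1$, and $v(p)>H$ (i.e. $v(p)>h$ for every $h\in H$). Then $p$ divides the binomial coefficient $\binom{\ell}{k}$ for every $k\in J$ and every $\ell\in B$ with $\ell>k$.
   Context: Let $(K,v)$ be a valued field and $p$ the characteristic exponent of its residue field ($p=1$ if the residue characteristic is $0$, otherwise $p$ is the residue characteristic); $v(p)$ denotes the value of $p\cdot1\in K$ (so $v(p)=\infty$ if $\mathrm{char}K=p>0$). Let $\Gamma$ be the divisible hull of $vK$, embedded in a divisible ordered abelian group $\Lambda$. Let $\nu\colon K[x]\to\Lambda\cup\{\infty\}$ be a valuation extending $v$ which is well-specified, i.e. it is not the case that simultaneously $\nu^{-1}(\infty)=0$, the value group of $\nu$ modulo $\Gamma$ is torsion, and the residue field of $\nu$ is algebraic over that of $v$. For $s\ge0$ let $\partial_s$ be the $s$-th Hasse–Schmidt derivative, defined by $f(x+y)=\sum_{s\ge0}(\partial_sf)y^s$. For nonconstant $f$ with $\nu(f)<\infty$ the level is $\epsilon_\nu(f)=\max\{(\nu(f)-\nu(\partial_sf))/s: s\ge1\}$; $\epsilon_\nu(a)=-\infty$ for $a\in K$. A monic $Q\in K[x]$ is a key polynomial for $\nu$ if $\epsilon_\nu(f)<\epsilon_\nu(Q)$ whenever $\deg f<\deg Q$. For monic $Q$, each $f$ has a unique $Q$-expansion $f=\sum_{i\ge0}f_{Q,i}Q^i$ with $\deg f_{Q,i}<\deg Q$; set $\nu_Q(f)=\min_i\nu(f_{Q,i}Q^i)$. Fix $m\ge1$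 such that the set $\Psi_m$ of key polynomials of degree $m$ for $\nu$ is nonempty and has no element of maximal $\nu$-value. Let $\mathcal Q\subseteq\Psi_m$ be well-ordered by $Q<R\iff\nu(Q)<\nu(R)$ and cofinal in $\Psi_m$ for $\nu$-values; write $\gamma_Q=\nu(Q)$. As in the paper, all values $\nu_Q(f)$ ($f\ne0$) lie in $\Gamma$. ''For all $Q$ large enough'' means for all $Q$ in a final segment of $\mathcal Q$. $f$ is $\mathcal Q$-stable if $\nu_Q(f)=\nu(f)$ for all $Q$ large enough, $\mathcal Q$-unstable otherwise. Assume unstable polynomials exist; limit key polynomials are the monic $\mathcal Q$-unstable polynomials of minimal degree, forming $\mathrm{KP}_\infty(\mathcal Q)$. Fix $F\in\mathrm{KP}_\infty(\mathcal Q)$, $D=\lfloor\deg F/m\rfloor$, $F=\sum_{\ell=0}^DF_{Q,\ell}Q^\ell$, $\beta_{Q,\ell}=\nu(F_{Q,\ell})\in\Gamma\cup\{\infty\}$. Let $\delta^L$ be the smallest initial segment of $\Gamma$ containing $\{\nu_Q(F):Q\in\mathcal Q\}$; write $x>\delta^L$ if $x\in(\Gamma\setminus\delta^L)\cup\{\infty\}$. Let $J$ be the set of $\ell\in\{0,\dots,D\}$ with $\beta_{Q,\ell}+\ell\gamma_Q>\delta^L$ for all $Q$ large enough, and $B=\{0,\dots,D\}\setminus J$. A cut $\eta=(\eta^L,\eta^R)$ of $\Gamma$ is vertically bounded if for every $x\in\eta^L$ and rational $q>1$ there is $y\in\eta^L$ with $q(y-x)>z-x$ for all $z\in\eta^L$;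 its invariance group is $\{h\in\Gamma:h+\eta^L=\eta^L\}$. Let $\gamma_{\mathcal Q}$ be the cut whose lower set is the smallest initial segment of $\Gamma$ containing $\{\gamma_Q\}$; $\mathcal Q$ is vertically unbounded if $\gamma_{\mathcal Q}$ is not vertically bounded; $H$ is the invariance group of $\gamma_{\mathcal Q}$. *)

(* Defs.v *)
From HB Require Import structures.
From mathcomp Require Import all_boot all_order all_algebra.
Set Implicit Arguments. Unset Strict Implicit. Unset Printing Implicit Defensive.
Import Order.TTheory GRing.Theory Num.Theory.
Local Open Scope ring_scope.

(* Divisible ordered abelian groups.  A divisible torsion-free abelian  *)
(* group is (uniquely) a Q-vector space, so we model the divisible      *)
(* ordered abelian group Lambda as a Q-vector space with a total order  *)
(* compatible with addition.                                            *)
Record divOAG := DivOAG {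
  oag_car :> lmodType rat;
  oag_le : rel oag_car;
  oag_refl : reflexive oag_le;
  oag_trans : transitive oag_le;
  oag_anti : antisymmetric oag_le;
  oag_total : total oag_le;
  oag_addr : forall x y z, oag_le x y -> oag_le (x + z) (y + z)
}.

Section Ext.
Variable L : divOAG.

Definition oag_lt (x y : L) := oag_le x y && (x != y).

(* Lambda u {oo} is represented by option L, None = oo. *)
Definition oadd (a b : option L) : option L :=
  match a, b with Some x, Some y => Some (x + y) | _, _ => None end.
Definition onat (a : option L) (n : nat) : option L :=
  match a with Some x => Some (x *+ n) | None => None end.
Definition ole (a b : option L) : bool :=
  match a, b with
  | _, None => true
  | None, Some _ => false
  | Some x, Some y => oag_le x y
  end.
Definition olt (a b : option L) : bool := ole a b && (a != b).
Definition omin (a b : option L) : option L := if ole a b then a else b.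

Inductive xval := NegInf | Fin of L | PosInf.
Definition xle (a b : xval) : bool :=
  match a, b with
  | NegInf, _ => true
  | _, PosInf => true
  | Fin x, Fin y => oag_le x y
  | _, _ => false
  end.
Definition xlt (a b : xval) : bool := xle a b && ~~ xle b a.
Definition xmax (a b : xval) : xval := if xle a b then b else a.
End Ext.

Section Valued.
Variables (K : fieldType) (L : divOAG).

Definition is_valuation (v : K -> option L) : Prop :=
  [/\ forall a, v a = None <-> a = 0,
      forall a b, v (a * b) = oadd (v a) (v b) &
      forall a b, ole (omin (v a) (v b)) (v (a + b))].

(* valuation nu on K[x] (possibly with nontrivial support) extending v *)
Definition is_poly_valuation_ext (v : K -> option L)
    (nu : {poly K} -> option L) : Prop :=
  [/\ forall c, nu c%:P = v c,
      forall f g, nu (f * g) = oadd (nu f) (nu g) &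
      forall f g, ole (omin (nu f) (nu g)) (nu (f + g))].

(* value group vK and its divisible hull Gamma inside Lambda *)
Definition Gam (v : K -> option L) (x : L) : Prop :=
  exists n : nat, (0 < n)%N /\ exists a : K, v a = Some (x *+ n).

(* characteristic exponent of the residue field of v:
   the residue characteristic is the prime q with v(q) > 0, if any. *)
Definition char_exp (v : K -> option L) (p : nat) : Prop :=
  (prime p /\ olt (Some 0) (v p%:R)) \/
  (p = 1%N /\ forall q, prime q -> ~ olt (Some 0) (v q%:R)).

Definition trivial_support (nu : {poly K} -> option L) : Prop :=
  forall f, nu f = None -> f = 0.
Definition valgroup_torsion_mod_Gamma (v : K -> option L)
    (nu : {poly K} -> option L) : Prop :=
  forall f g a b, nu f = Some a -> nu g = Some b ->
    exists n : nat, (0 < n)%N /\ Gam v ((a - b) *+ n).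
(* The residue field of nu consists of the residues of f/g with
   nu(g) < oo and nu(g) <= nu(f); such a residue is algebraic over the
   residue field of v iff it is a root of a polynomial with
   v-integral coefficients a_0..a_n, a_n a v-unit. *)
Definition residue_algebraic (v : K -> option L)
    (nu : {poly K} -> option L) : Prop :=
  forall f g b, nu g = Some b -> ole (Some b) (nu f) ->
    exists n : nat, (0 < n)%N /\ exists a : nat -> K,
      [/\ forall i, (i <= n)%N -> ole (Some 0) (v (a i)),
          v (a n) = Some 0 &
          olt (Some (b *+ n))
              (nu (\sum_(i < n.+1) (a i)%:P * f ^+ i * g ^+ (n - i)))].
Definition well_specified (v : K -> option L) (nu : {poly K} -> option L) :=
  ~ [/\ trivial_support nu, valgroup_torsion_mod_Gamma v nu &
        residue_algebraic v nu].

(* Hasse-Schmidt derivatives: nderivn s f = \partial_s f. *)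
(* level epsilon_nu(f); for nonconstant f with nu(f) = oo we use the
   value +oo given by the defining formula. *)
Definition level (nu : {poly K} -> option L) (f : {poly K}) : xval L :=
  if (size f <= 1)%N then NegInf L else
  match nu f with
  | None => PosInf L
  | Some a =>
      foldr (fun s acc =>
               xmax (match nu (nderivn s f) with
                     | Some b => Fin ((s%:R : rat)^-1 *: (a - b))
                     | None => NegInf L
                     end) acc)
            (NegInf L) (iota 1 (size f).-1)
  end.

Definition key_poly (nu : {poly K} -> option L) (Q : {poly K}) : Prop :=
  Q \is monic /\
  forall f : {poly K}, (size f < size Q)%N -> xlt (level nu f) (level nu Q).

Definition Psi (nu : {poly K} -> option L) (m : nat) (Q : {poly K}) : Prop :=
  key_poly nu Q /\ (size Q).-1 = m.

(* Q-expansion coefficients f_{Q,i} and truncation nu_Q *)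
Definition qcoef (Q f : {poly K}) (i : nat) : {poly K} := (f %/ Q ^+ i) %% Q.
Definition nuQ (nu : {poly K} -> option L) (Q f : {poly K}) : option L :=
  foldr (@omin L) None
        [seq nu (qcoef Q f i * Q ^+ i) | i <- iota 0 (size f)].

(* "for all Q in Qs large enough" *)
Definition eventually (nu : {poly K} -> option L) (Qs : {poly K} -> Prop)
    (P : {poly K} -> Prop) : Prop :=
  exists Q0, Qs Q0 /\ forall Q, Qs Q -> ole (nu Q0) (nu Q) -> P Q.

Definition stable (nu : {poly K} -> option L) (Qs : {poly K} -> Prop) (f : {poly K}) : Prop :=
  eventually nu Qs (fun Q => nuQ nu Q f = nu f).

Definition limit_key_poly (nu : {poly K} -> option L) (Qs : {poly K} -> Prop) (F : {poly K}) : Prop :=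
  [/\ F \is monic, ~ stable nu Qs F &
      forall g : {poly K}, g \is monic -> ~ stable nu Qs g ->
        (size F <= size g)%N].

(* lower set delta^L: smallest initial segment of Gamma containing
   { nu_Q(F) : Q in Qs } *)
Definition deltaL (v : K -> option L) (nu : {poly K} -> option L)
    (Qs : {poly K} -> Prop) (F : {poly K}) (x : L) : Prop :=
  Gam v x /\ exists Q, Qs Q /\ ole (Some x) (nuQ nu Q F).
(* y > delta^L  iff  y in (Gamma \ delta^L) u {oo} *)
Definition above_deltaL v nu Qs F (y : option L) : Prop :=
  match y with
  | None => True
  | Some x => Gam v x /\ ~ deltaL v nu Qs F x
  end.

Definition Jset v nu Qs (F : {poly K}) (l : nat) : Prop :=
  (l <= (size F).-1 %/ 1)%N /\
  eventually nu Qs (fun Q =>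
     above_deltaL v nu Qs F (oadd (nu (qcoef Q F l)) (onat (nu Q) l))).
Definition Bset v nu Qs (F : {poly K}) (l : nat) : Prop :=
  (l <= (size F).-1 %/ 1)%N /\ ~ Jset v nu Qs F l.

(* lower set of the cut gamma_Qs *)
Definition gammaL (v : K -> option L) (nu : {poly K} -> option L)
    (Qs : {poly K} -> Prop) (x : L) : Prop :=
  Gam v x /\ exists Q, Qs Q /\ ole (Some x) (nu Q).
End Valued.

(* cuts of Gamma given by their lower set *)
Definition vert_bounded (L : divOAG) (eL : L -> Prop) :=
  forall x, eL x -> forall q : rat, 1 < q ->
    exists y, eL y /\ forall z, eL z -> oag_lt (z - x) (q *: (y - x)).
Definition invariance_group (L : divOAG) (G : L -> Prop) (eL : L -> Prop)
    (h : L) : Prop :=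
  G h /\ (forall x, eL x -> eL (h + x)) /\
         (forall y, eL y -> exists x, eL x /\ y = h + x).

(* Main.v *)
Require Import Defs.
From HB Require Import structures.
From mathcomp Require Import all_boot all_order all_algebra zify ring.
From Stdlib Require Import Classical.
Set Implicit Arguments. Unset Strict Implicit. Unset Printing Implicit Defensive.
Import Order.TTheory GRing.Theory Num.Theory.
Local Open Scope ring_scope.

Section Ord.
Variable L : divOAG.
Local Notation le := (@oag_le L).

Lemma leR (x : L) : le x x. Proof. exact: oag_refl. Qed.
Lemma leT (x y z : L) : le x y -> le y z -> le x z.
Proof. exact: oag_trans. Qed.
Lemma leA (x y : L) : le x y -> le y x -> x = y.
Proof. by move=> h1 h2; apply: oag_anti; rewrite h1 h2. Qed.
Lemma leTot (x y : L) : le x y || le y x. Proof. exact: oag_total. Qed.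
Lemma leD2r (x y z : L) : le (x + z) (y + z) = le x y.
Proof.
apply/idP/idP; last exact: oag_addr.
by move=> /(oag_addr (-z)); rewrite !addrK.
Qed.
Lemma leD2l (x y z : L) : le (z + x) (z + y) = le x y.
Proof. by rewrite [z + x]addrC [z + y]addrC leD2r. Qed.
Lemma leD (x y z w : L) : le x y -> le z w -> le (x + z) (y + w).
Proof.
move=> h1 h2; apply: (@leT _ (y + z)); first by rewrite leD2r.
by rewrite leD2l.
Qed.
Lemma le_sub0 (x y : L) : le x y = le 0 (y - x).
Proof. by rewrite -(leD2r x y (-x)) subrr. Qed.
Lemma nat_inj (x y : L) n : (0 < n)%N -> x *+ n = y *+ n -> x = y.
Proof.
move=> n0 h.
have hn : (n%:R : rat) != 0 by rewrite pnatr_eq0 -lt0n.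
rewrite -[x]scale1r -[y]scale1r -(mulVf hn) -!scalerA !scaler_nat h //.
Qed.
Lemma le_nat0 (x : L) n : le 0 x -> le 0 (x *+ n).
Proof.
move=> h; elim: n => [|n IH]; first by rewrite mulr0n leR.
rewrite mulrS -[0](addr0 0); exact: leD.
Qed.
Lemma le_natr (x y : L) n : le x y -> le (x *+ n) (y *+ n).
Proof.
by rewrite !(le_sub0 (_ *+ _)) -mulrnBl le_sub0 => /le_nat0; apply.
Qed.
Lemma le_nat_rev (x y : L) n : (0 < n)%N -> le (x *+ n) (y *+ n) -> le x y.
Proof.
move=> n0 h; case/orP: (leTot x y) => // h2.
have := le_natr n h2 => h3. by rewrite (nat_inj n0 (leA h h3)) leR.
Qed.

Lemma L1 (b d : L) i : le 0 d -> d != 0 -> (0 < i)%N -> ~~ le (b + d *+ i) b.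
Proof.
move=> h0 hd hi; apply/negP => h.
have h2 : le (d *+ i) 0 by rewrite -(leD2l _ _ b) addr0.
have e : d *+ i = 0 *+ i by rewrite mul0rn; apply: leA h2 (le_nat0 i h0).
by move/eqP: hd; apply; apply: nat_inj hi e.
Qed.
Lemma L2 (b0 b c d : L) j0 j : le (b0 + c *+ j0) (b + c *+ j) -> le 0 d -> d != 0 ->
  (j0 < j)%N -> ~~ le (b + (c + d) *+ j) (b0 + (c + d) *+ j0).
Proof.
move=> h1 h0 hd hj; apply/negP => h.
rewrite !mulrnDl !addrA in h.
have h3 : le (b0 + c *+ j0 + d *+ j0) (b + c *+ j + d *+ j0) by rewrite leD2r.
have h4 := leT h h3; rewrite leD2l in h4.
have e : j = (j0 + (j - j0))%N by lia.
rewrite e mulrnDr in h4.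
have : (0 < j - j0)%N by lia.
by move/(L1 (d *+ j0) h0 hd)/negP.
Qed.

Lemma L3 (b y z c : L) i j : le 0 z -> le b (y + c *+ (i + j)) ->
  le (b - c *+ i) (y + z + c *+ j).
Proof.
move=> hz h; rewrite -(leD2r _ _ (c *+ i)) subrK; apply: leT h _.
have -> : y + z + c *+ j + c *+ i = (y + c *+ (i + j)) + z.
  by rewrite mulrnDr [c *+ i + _]addrC addrA [RHS]addrAC [y + c *+ j + z]addrAC.
by rewrite -{1}[y + _]addr0 leD2l.
Qed.
End Ord.


Section Opt.
Variable L : divOAG.
Implicit Types a b c d : option L.
Implicit Types x y z : L.

Lemma oleR a : ole a a. Proof. by case: a => //= x; apply: leR. Qed.
Lemma oleT a b c : ole a b -> ole b c -> ole a c.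
Proof. by case: a; case: b; case: c => //= x y z; apply: leT. Qed.
Lemma oleA a b : ole a b -> ole b a -> a = b.
Proof. by case: a; case: b => //= x y h1 h2; rewrite (leA h2 h1). Qed.
Lemma oleTot a b : ole a b || ole b a.
Proof. by case: a; case: b => //= x y; apply: leTot. Qed.
Lemma oleN a : ole a None. Proof. by case: a. Qed.
Lemma oleNl a : ole None a -> a = None. Proof. by case: a. Qed.
Lemma oltNge a b : olt a b = ~~ ole b a.
Proof.
rewrite /olt; apply/andP/idP.
  by case=> h1 /eqP h2; apply/negP => h3; apply: h2; apply: oleA.
move=> h; have h1 : ole a b by case/orP: (oleTot a b) => // h2; rewrite h2 in h.
split => //; apply/eqP => e; by rewrite e oleR in h.
Qed.
Lemma olt_le a b : olt a b -> ole a b. Proof. by case/andP. Qed.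
Lemma olt_neq a b : olt a b -> a <> b. Proof. by case/andP => _ /eqP. Qed.
Lemma oleNgt a b : ole a b = ~~ olt b a.
Proof. by rewrite oltNge negbK. Qed.
Lemma olt_leT a b c : olt a b -> ole b c -> olt a c.
Proof.
rewrite !oltNge => h1 h2; apply/negP => h3; move/negP: h1; apply; exact: oleT h2 h3.
Qed.
Lemma ole_ltT a b c : ole a b -> olt b c -> olt a c.
Proof.
rewrite !oltNge => h1 h2; apply/negP => h3; move/negP: h2; apply; exact: oleT h3 h1.
Qed.
Lemma oltT a b c : olt a b -> olt b c -> olt a c.
Proof. by move=> h1 h2; apply: olt_leT h1 (olt_le h2). Qed.
Lemma olt_irr a : ~ olt a a. Proof. by rewrite oltNge oleR. Qed.

Lemma oaddC a b : oadd a b = oadd b a.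
Proof. by case: a; case: b => //= x y; rewrite addrC. Qed.
Lemma oaddA a b c : oadd a (oadd b c) = oadd (oadd a b) c.
Proof. by case: a; case: b; case: c => //= x y z; rewrite addrA. Qed.
Lemma oadd0 a : oadd a (Some 0) = a. Proof. by case: a => //= x; rewrite addr0. Qed.
Lemma oaddN a : oadd a None = None. Proof. by case: a. Qed.
Lemma ole_oadd2l c a b : ole a b -> ole (oadd c a) (oadd c b).
Proof. by case: a; case: b; case: c => //= x y z h; rewrite leD2l. Qed.
Lemma ole_oadd a b c d : ole a b -> ole c d -> ole (oadd a c) (oadd b d).
Proof.
move=> h1 h2; apply: (oleT (ole_oadd2l a h2)).
by rewrite (oaddC a) (oaddC b); apply: ole_oadd2l.
Qed.
Lemma ole_oadd2lE x a b : ole (oadd (Some x) a) (oadd (Some x) b) = ole a b.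
Proof. by case: a; case: b => //= y z; rewrite leD2l. Qed.
Lemma olt_oadd2lE x a b : olt (oadd (Some x) a) (oadd (Some x) b) = olt a b.
Proof. by rewrite !oltNge ole_oadd2lE. Qed.

Lemma omin_l a b : ole (omin a b) a.
Proof.
rewrite /omin; case: ifP => h; first exact: oleR.
by case/orP: (oleTot a b) => h2; [rewrite h2 in h | ].
Qed.
Lemma omin_r a b : ole (omin a b) b.
Proof. rewrite /omin; case: ifP => h //; exact: oleR. Qed.
Lemma ole_min c a b : ole c a -> ole c b -> ole c (omin a b).
Proof. by rewrite /omin; case: ifP. Qed.
Lemma omin_eq a b : omin a b = a \/ omin a b = b.
Proof. rewrite /omin; case: ifP; auto. Qed.

Lemma fm_le (f : nat -> option L) s i : i \in s ->
  ole (foldr (@omin L) None [seq f j | j <- s]) (f i).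
Proof.
elim: s => //= j s IH; rewrite inE => /orP [/eqP ->|h]; first exact: omin_l.
exact: oleT (omin_r _ _) (IH h).
Qed.
Lemma fm_ge (f : nat -> option L) s c : (forall i, i \in s -> ole c (f i)) ->
  ole c (foldr (@omin L) None [seq f j | j <- s]).
Proof.
elim: s => /= [|j s IH] h; first exact: oleN.
apply: ole_min; first by apply: h; rewrite inE eqxx.
by apply: IH => i hi; apply: h; rewrite inE hi orbT.
Qed.
Lemma fm_att (f : nat -> option L) s : s <> [::] ->
  exists2 i, i \in s & foldr (@omin L) None [seq f j | j <- s] = f i.
Proof.
elim: s => //= j s IH _.
case: s IH => [|j' s] IH.
  by exists j; rewrite ?inE ?eqxx //= /omin oleN.
case: (omin_eq (f j) (foldr (@omin L) None [seq f j | j <- j' :: s])) => ->.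
  by exists j; rewrite ?inE ?eqxx.
have [i hi ->] := IH ltac:(done); exists i => //; by rewrite inE hi orbT.
Qed.

Lemma fm_oadd (f : nat -> option L) s x :
  foldr (@omin L) None [seq oadd (Some x) (f j) | j <- s] =
  oadd (Some x) (foldr (@omin L) None [seq f j | j <- s]).
Proof.
elim: s => //= j s ->; rewrite /omin ole_oadd2lE; by case: ifP.
Qed.
End Opt.


Set Default Proof Using "All".
Section Val.
Variables (L : divOAG) (R : comNzRingType) (w : R -> option L).
Hypothesis w0 : w 0 = None.
Hypothesis w1 : w 1 = Some 0.
Hypothesis wM : forall x y, w (x * y) = oadd (w x) (w y).
Hypothesis wD : forall x y, ole (omin (w x) (w y)) (w (x + y)).

Lemma wN1 : w (-1) = Some 0.
Proof.
have := wM (-1) (-1); rewrite mulrNN mulr1 w1.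
case: (w (-1)) => //= y [] h; congr Some.
apply: (@nat_inj L _ _ 2) => //; by rewrite mulr2n -h mul0rn.
Qed.
Lemma wN x : w (- x) = w x.
Proof. by rewrite -mulN1r wM wN1 oaddC oadd0. Qed.
Lemma wB x y : ole (omin (w x) (w y)) (w (x - y)).
Proof. by rewrite -(wN y); apply: wD. Qed.
Lemma wX x y n : w x = Some y -> w (x ^+ n) = Some (y *+ n).
Proof.
move=> h; elim: n => [|n IH]; first by rewrite expr0 w1 mulr0n.
by rewrite exprS wM IH h /= mulrS.
Qed.
Lemma wnat n : ole (Some 0) (w n%:R).
Proof.
elim: n => [|n IH]; first by rewrite mulr0n w0.
rewrite -addn1 natrD; apply: oleT (wD _ _); apply: ole_min => //; by rewrite w1 /= leR.
Qed.
Lemma w_sum_ge (I : Type) (r : seq I) (P : pred I) (F : I -> R) c :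
  (forall i, P i -> ole c (w (F i))) -> ole c (w (\sum_(i <- r | P i) F i)).
Proof.
move=> h; apply: (big_ind (fun x => ole c (w x))) => //.
  by rewrite w0 oleN.
by move=> x y h1 h2; apply: oleT (wD _ _); apply: ole_min.
Qed.
Lemma w_sum_gt (I : Type) (r : seq I) (P : pred I) (F : I -> R) c : c != None ->
  (forall i, P i -> olt c (w (F i))) -> olt c (w (\sum_(i <- r | P i) F i)).
Proof.
move=> hc h; apply: (big_ind (fun x => olt c (w x))) => //.
  by rewrite w0 /olt oleN hc.
move=> x y h1 h2; apply: olt_leT (wD _ _).
by case: (omin_eq (w x) (w y)) => ->.
Qed.
Lemma w_strict x y : olt (w x) (w y) -> w (x + y) = w x.
Proof.
move=> h; apply: oleA; last first.
  apply: oleT (wD _ _); apply: ole_min; [exact: oleR | exact: olt_le].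
have := wB (x + y) y; rewrite addrK.
case: (omin_eq (w (x + y)) (w y)) => ->; first by [].
move=> h2; exfalso; move: h; rewrite oltNge h2 //.
Qed.
Lemma w_sum_uniq n (F : nat -> R) i0 : (i0 < n)%N -> w (F i0) != None ->
  (forall i, (i < n)%N -> i != i0 -> olt (w (F i0)) (w (F i))) ->
  w (\sum_(i < n) F i) = w (F i0).
Proof.
move=> lt hn h.
rewrite (bigD1 (Ordinal lt)) //=; apply: w_strict.
apply: w_sum_gt => // i hi; apply: h => //.
Qed.
End Val.


Lemma bin_id i j m :
  ('C(i + (j + m), i) * 'C(j + m, j) = 'C(i + j + m, i + j) * 'C(i + j, i))%N.
Proof.
have e1 := bin_fact (leq_addr (j + m) i); rewrite addKn in e1.
have e2 := bin_fact (leq_addr m j); rewrite addKn in e2.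
have e3 := bin_fact (leq_addr m (i + j)); rewrite addKn in e3.
have e4 := bin_fact (leq_addr j i); rewrite addKn in e4.
rewrite addnA in e1.
have f1 := fact_gt0 i; have f2 := fact_gt0 j; have f3 := fact_gt0 m.
apply/eqP; rewrite -(@eqn_pmul2r (i`! * j`! * m`!)); last by rewrite !muln_gt0 f1 f2 f3.
apply/eqP.
transitivity ('C(i + j + m, i) * (i`! * ('C(j + m, j) * (j`! * m`!))))%N.
  rewrite addnA; ring.
rewrite e2 e1 -e3 -e4; ring.
Qed.

Section PolyK.
Variable K : fieldType.
Implicit Types f g p : {poly K}.

Lemma nderivnN f i j : (f^`N(i))^`N(j) = f^`N(i + j) *+ 'C(i + j, i).
Proof.
apply/polyP => m; rewrite coefMn !coef_nderivn -!mulrnA.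
by rewrite -addnA bin_id addnA.
Qed.

Lemma taylorP f a :
  f = \sum_(i < size f) (f^`N(i)).[a]%:P * ('X - a%:P) ^+ i.
Proof.
rewrite {1}(_ : f = f^:P.[a%:P + ('X - a%:P)]); last first.
  by rewrite addrC subrK -/(comp_poly 'X f) comp_polyXr.
rewrite nderiv_taylor; last by rewrite /GRing.comm mulrC.
rewrite size_map_polyC; apply: eq_bigr => i _.
by rewrite nderivn_map horner_map.
Qed.

Lemma divM p d1 d2 : d1 != 0 -> d2 != 0 -> p %/ (d1 * d2) = p %/ d1 %/ d2.
Proof.
move=> h1 h2.
have E : p = (p %/ d1 %/ d2) * (d1 * d2) + ((p %/ d1) %% d2 * d1 + p %% d1).
  rewrite addrA mulrA [_ * d1 * d2]mulrAC -mulrDl -divp_eq -divp_eq //.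
rewrite {1}E divp_addl_mul_small //.
have s1 : (size (p %% d1)%R < size d1)%N by rewrite ltn_modp.
have s2 : (size (p %/ d1 %% d2)%R < size d2)%N by rewrite ltn_modp.
have s3 := size_mul_leq (p %/ d1 %% d2) d1.
rewrite size_mul // .
have z1 : (0 < size d1)%N by rewrite size_poly_gt0.
have z2 : (0 < size d2)%N by rewrite size_poly_gt0.
apply: leq_ltn_trans (size_add _ _) _.
rewrite gtn_max; apply/andP; split.
  apply: leq_ltn_trans s3 _.
  by move: s2 z1 z2; set x := size _; set y := size d1; set z := size d2; lia.
by move: s1 z1 z2; set x := size _; set y := size d1; set z := size d2; lia.
Qed.

Section QExp.
Variable a : K.
Local Notation Q := ('X - a%:P).
Definition Ssum (c : nat -> K) n := \sum_(j < n) (c j)%:P * Q ^+ j.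

Lemma SsumS c n : Ssum c n.+1 = Ssum (fun j => c j.+1) n * Q + (c 0%N)%:P.
Proof.
rewrite /Ssum big_ord_recl expr0 mulr1 addrC mulr_suml; congr (_ + _).
by apply: eq_bigr => j _; rewrite -mulrA -exprSr.
Qed.

Lemma Q_neq0 : Q != 0. Proof. by rewrite -size_poly_gt0 size_XsubC. Qed.

Lemma SsumDiv c n : Ssum c n.+1 %/ Q = Ssum (fun j => c j.+1) n.
Proof. by rewrite SsumS divp_addl_mul_small // size_XsubC ltnS size_polyC_leq1. Qed.
Lemma SsumMod c n : Ssum c n.+1 %% Q = (c 0%N)%:P.
Proof. by rewrite SsumS modp_addl_mul_small // size_XsubC ltnS size_polyC_leq1. Qed.
Lemma Ssum0 c : Ssum c 0 = 0. Proof. by rewrite /Ssum big_ord0. Qed.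

Lemma SsumDivX c n i : Ssum c n %/ Q ^+ i = Ssum (fun j => c (j + i)%N) (n - i).
Proof.
elim: i => [|i IH]; first by rewrite expr0 divp1 subn0; apply: eq_bigr => j _; rewrite addn0.
rewrite exprSr divM ?expf_neq0 ?Q_neq0 // IH subnS.
case e: (n - i)%N => [|k] /=; first by rewrite !Ssum0 div0p.
rewrite SsumDiv; apply: eq_bigr => j _; by rewrite addSnnS.
Qed.

Lemma qcoefS c n i : qcoef Q (Ssum c n) i = (if (i < n)%N then c i else 0)%:P.
Proof.
rewrite /qcoef SsumDivX.
case: ltnP => h.
  by rewrite -(subnSK h) SsumMod.
by rewrite (_ : (n - i)%N = 0%N) ?Ssum0 ?mod0p //; lia.
Qed.

Lemma qcoefE f i : qcoef Q f i = (f^`N(i)).[a]%:P.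
Proof.
rewrite {1}(taylorP f a) (_ : \sum_(_ < _) _ = Ssum (fun i => (f^`N(i)).[a]) (size f)) //.
rewrite qcoefS; case: ltnP => // h.
by rewrite nderivn_poly0 // horner0.
Qed.
End QExp.
End PolyK.


Set Default Proof Using "All".
Section Main.
Variables (K : fieldType) (L : divOAG) (v : K -> option L)
  (nu : {poly K} -> option L) (Qs : {poly K} -> Prop) (F : {poly K}).
Hypothesis hv : is_valuation v.
Hypothesis hnu : is_poly_valuation_ext v nu.
Hypothesis hPsi_ex : exists Q, Psi nu 1 Q.
Hypothesis hnomax : forall Q, Psi nu 1 Q -> exists R, Psi nu 1 R /\ olt (nu Q) (nu R).
Hypothesis hQsPsi : forall Q, Qs Q -> Psi nu 1 Q.
Hypothesis hcof : forall P, Psi nu 1 P -> exists Q, Qs Q /\ ole (nu P) (nu Q).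
Hypothesis hF : limit_key_poly nu Qs F.
Implicit Types (f g Q R : {poly K}).

Lemma v0 : v 0 = None. Proof. by case: hv => h _ _; exact: (proj2 (h 0)). Qed.
Lemma vM a b : v (a * b) = oadd (v a) (v b). Proof. by case: hv. Qed.
Lemma vD a b : ole (omin (v a) (v b)) (v (a + b)). Proof. by case: hv. Qed.
Lemma vNone a : v a = None -> a = 0. Proof. by case: hv => h _ _; exact: (proj1 (h a)). Qed.
Lemma v1 : v 1 = Some 0.
Proof.
have := vM 1 1; rewrite mulr1; case e: (v 1) => [x|] /=.
  move=> [] h; congr Some; by apply: (@addrI _ x); rewrite -h addr0.
by move: e => /vNone /eqP; rewrite oner_eq0.
Qed.
Lemma nuC c : nu c%:P = v c. Proof. by case: hnu. Qed.
Lemma nuM f g : nu (f * g) = oadd (nu f) (nu g). Proof. by case: hnu. Qed.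
Lemma nuD f g : ole (omin (nu f) (nu g)) (nu (f + g)). Proof. by case: hnu. Qed.
Lemma nu0 : nu 0 = None. Proof. by rewrite -polyC0 nuC v0. Qed.
Lemma nu1 : nu 1 = Some 0. Proof. by rewrite -polyC1 nuC v1. Qed.

Lemma vN a : v (- a) = v a. Proof. exact: (wN v0 v1 vM vD). Qed.
Lemma vB a b : ole (omin (v a) (v b)) (v (a - b)). Proof. exact: (wB v0 v1 vM vD). Qed.
Lemma vX a x n : v a = Some x -> v (a ^+ n) = Some (x *+ n).
Proof. exact: (wX v0 v1 vM vD). Qed.
Lemma vnat n : ole (Some 0) (v n%:R). Proof. exact: (wnat v0 v1 vM vD). Qed.
Lemma nuN f : nu (- f) = nu f. Proof. exact: (wN nu0 nu1 nuM nuD). Qed.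
Lemma nuX f x n : nu f = Some x -> nu (f ^+ n) = Some (x *+ n).
Proof. exact: (wX nu0 nu1 nuM nuD). Qed.

Definition rt (Q : {poly K}) := - Q`_0.

Lemma Psi_form Q : Psi nu 1 Q -> Q = 'X - (rt Q)%:P.
Proof.
case=> [[hm _] hs]; rewrite /rt polyCN opprK.
have s2 : size Q = 2%N by move: hs; case: (size Q) => // n /= ->.
apply/polyP => i; rewrite coefD coefX coefC.
case: i => [|[|i]] /=; first by rewrite add0r.
  by rewrite addr0; move/monicP: hm; rewrite lead_coefE s2.
by rewrite addr0 nth_default // s2.
Qed.

Lemma nu_fin Q : Qs Q -> exists c : L, nu Q = Some c.
Proof.
move=> /hQsPsi /hnomax [R [_ h]].
case e: (nu Q) => [c|]; first by exists c.
by move: h; rewrite e /olt; case: (nu R).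
Qed.

Lemma next Q : Qs Q -> exists R, Qs R /\ olt (nu Q) (nu R).
Proof.
move=> /hQsPsi /hnomax [R [hR h]]; have [S [hS h2]] := hcof hR.
by exists S; split => //; apply: olt_leT h h2.
Qed.

Lemma dval Q R : Psi nu 1 Q -> Psi nu 1 R -> olt (nu Q) (nu R) ->
  v (rt R - rt Q) = nu Q.
Proof.
move=> hQ hR h.
have eQ := Psi_form hQ; have eR := Psi_form hR.
have E : (rt R - rt Q)%:P = Q - R.
  by rewrite [in RHS]eQ [in RHS]eR polyCB; ring.
apply: oleA.
  have := nuD R (rt R - rt Q)%:P; rewrite E [R + _]addrC subrK.
  case: (omin_eq (nu R) (nu (Q - R))) => ->.
    by move=> h2; exfalso; move: h; rewrite oltNge h2.
  by rewrite -nuC E.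
rewrite -nuC E; apply: oleT (nuD _ _); rewrite nuN.
apply: ole_min; [exact: oleR | exact: olt_le].
Qed.

Lemma Gam_v a x : v a = Some x -> Gam v x.
Proof. by move=> h; exists 1%N; split => //; exists a; rewrite mulr1n. Qed.
Lemma Gam_add x y : Gam v x -> Gam v y -> Gam v (x + y).
Proof.
move=> [n [n0 [a ha]]] [m [m0 [b hb]]].
exists (n * m)%N; split; first by rewrite muln_gt0 n0 m0.
exists (a ^+ m * b ^+ n); rewrite vM (vX m ha) (vX n hb) /=.
by rewrite mulrnDl -!mulrnA [(m * n)%N]mulnC.
Qed.
Lemma Gam0 : Gam v 0. Proof. exact: (Gam_v v1). Qed.
Lemma Gam_nat x n : Gam v x -> Gam v (x *+ n).
Proof.
move=> h; elim: n => [|n IH]; first by rewrite mulr0n; apply: Gam0.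
by rewrite mulrS; apply: Gam_add.
Qed.

Definition Tg (g Q : {poly K}) j := oadd (v ((g^`N(j)).[rt Q])) (onat (nu Q) j).

Lemma qcoefQ g Q j : Qs Q -> qcoef Q g j = (g^`N(j)).[rt Q]%:P.
Proof. by move=> hQ; rewrite {1}(Psi_form (hQsPsi hQ)) qcoefE. Qed.

Lemma qterm g Q j : Qs Q -> nu (qcoef Q g j * Q ^+ j) = Tg g Q j.
Proof.
move=> hQ; have [c hc] := nu_fin hQ.
by rewrite nuM qcoefQ // nuC (nuX j hc) /Tg hc.
Qed.
Lemma qterm2 g Q j : Qs Q -> oadd (nu (qcoef Q g j)) (onat (nu Q) j) = Tg g Q j.
Proof. by move=> hQ; rewrite qcoefQ // nuC. Qed.

Lemma nuQE g Q : Qs Q ->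
  nuQ nu Q g = foldr (@omin L) None [seq Tg g Q i | i <- iota 0 (size g)].
Proof. by move=> hQ; rewrite /nuQ; congr foldr; apply: eq_map => i; apply: qterm. Qed.

Lemma Tg_big g Q j : (size g <= j)%N -> Tg g Q j = None.
Proof. by move=> h; rewrite /Tg nderivn_poly0 // horner0 v0. Qed.

Lemma gam_Gam Q c : Qs Q -> nu Q = Some c -> Gam v c.
Proof.
move=> hQ hc; have [R [hR h]] := next hQ.
apply: (@Gam_v (rt R - rt Q)); rewrite dval ?hc -?hc //; exact: hQsPsi.
Qed.

Lemma Tg_Gam g Q j x : Qs Q -> Tg g Q j = Some x -> Gam v x.
Proof.
move=> hQ; have [c hc] := nu_fin hQ; rewrite /Tg hc.
case e: (v _) => [b|] //= [] <-.
by apply: Gam_add; [apply: Gam_v e | apply: Gam_nat; apply: gam_Gam hc].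
Qed.

Lemma taylor0 f a : (forall j, (j < size f)%N -> (f^`N(j)).[a] = 0) -> f = 0.
Proof.
move=> h; rewrite (taylorP f a) big1 // => i _.
by rewrite h // mul0r.
Qed.

Lemma Tg_None g Q j : Qs Q -> Tg g Q j = None -> (g^`N(j)).[rt Q] = 0.
Proof.
move=> hQ; have [c hc] := nu_fin hQ; rewrite /Tg hc.
by case e: (v _) => [b|] //= _; apply: vNone.
Qed.

Lemma nuQ_fin g Q : Qs Q -> g != 0 -> nuQ nu Q g <> None.
Proof.
move=> hQ hg e; move/eqP: hg; apply; apply: (@taylor0 _ (rt Q)) => j hj.
apply: (Tg_None hQ); apply: oleNl; rewrite -e (nuQE _ hQ).
by apply: fm_le; rewrite mem_iota.
Qed.

Lemma stab_val g : stable nu Qs g -> g != 0 -> exists Q0, Qs Q0 /\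
  forall R, Qs R -> olt (nu Q0) (nu R) ->
    nu g = v (g.[rt R]) /\ forall i, ole (nu g) (Tg g R i).
Proof.
move=> [Q0 [hQ0 hst]] hg; exists Q0; split => // R hR hlt.
have st0 := hst Q0 hQ0 (oleR _).
have stR := hst R hR (olt_le hlt).
have [c0 hc0] := nu_fin hQ0; have [c1 hc1] := nu_fin hR.
have ge0 : forall i, ole (nu g) (Tg g Q0 i).
  move=> i; case: (ltnP i (size g)) => hi; last by rewrite Tg_big // oleN.
  by rewrite -st0 (nuQE _ hQ0); apply: fm_le; rewrite mem_iota.
have [b hb] : exists b, nu g = Some b.
  case e: (nu g) => [b|]; first by exists b.
  by exfalso; apply: (nuQ_fin hQ0 hg); rewrite st0 e.
have hd : v (rt R - rt Q0) = Some c0.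
  by rewrite dval ?hc0 -?hc0 //; apply: hQsPsi.
have bnd : forall i, ole (Some (b - c0 *+ i)) (v ((g^`N(i)).[rt R])).
  move=> i; rewrite (_ : rt R = rt Q0 + (rt R - rt Q0)); last by rewrite addrC subrK.
  rewrite nderiv_taylor; last by rewrite /GRing.comm mulrC.
  apply: (w_sum_ge v0 v1 vM vD) => j _.
  rewrite vM (vX j hd) nderivnN hornerMn -mulr_natr vM.
  have := ge0 (i + j)%N; rewrite hb /Tg hc0 /=.
  case: (v (g^`N(i + j)).[rt Q0]) => [y|] //= h.
  have := vnat 'C(i + j, i); case: (v _) => [z|] //= hz.
  exact: L3.
have ne : iota 0 (size g) <> [::].
  have : (0 < size g)%N by rewrite size_poly_gt0.
  by case: (size g).
have [i hi e] := @fm_att L (Tg g R) (iota 0 (size g)) ne.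
rewrite -(nuQE _ hR) stR hb in e.
have hc : oag_le c0 c1 /\ c1 - c0 != 0.
  move: hlt; rewrite hc0 hc1 /olt /= => /andP [h1 h2]; split => //.
  by rewrite subr_eq0 eq_sym; apply: contra h2 => /eqP ->.
case: hc => hle hne.
have gtR : forall i, ole (Some (b + (c1 - c0) *+ i)) (Tg g R i).
  move=> k; rewrite /Tg hc1 /=; have := bnd k; case: (v _) => [y|] //= h.
  rewrite mulrnBl addrA -(leD2r _ _ (c0 *+ k)) addrNK.
  by rewrite -[y + _ + _]addrA [c1 *+ k + _]addrC addrA leD2r -(leD2r _ _ (- (c0 *+ k))) addrK.
split; last first.
  move=> k; case: (ltnP k (size g)) => hk; last by rewrite Tg_big // oleN.
  by rewrite -stR (nuQE _ hR); apply: fm_le; rewrite mem_iota.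
case: i hi e => [|i] hi e.
  by rewrite hb e /Tg hc1 /= mulr0n nderivn0 oadd0.
exfalso; have := gtR i.+1; rewrite -e /=.
move=> h; have h0 : oag_le 0 (c1 - c0) by rewrite -le_sub0.
by have := L1 b h0 hne (isT : (0 < i.+1)%N); rewrite h.
Qed.

Lemma vfin a : a != 0 -> exists x, v a = Some x.
Proof. move=> h; case e: (v a) => [x|]; [by exists x | by move/vNone: e; move/eqP: h]. Qed.

Lemma stable_small g : g != 0 -> (size g < size F)%N -> stable nu Qs g.
Proof.
move=> hg hs.
set c := lead_coef g.
have hc : c != 0 by rewrite lead_coef_eq0.
set h := c^-1 *: g.
have hm : h \is monic by apply/monicP; rewrite lead_coefZ mulVf.
have sh : size h = size g by rewrite size_scale // invr_eq0.
have gE : g = c *: h by rewrite /h scalerA mulfV // scale1r.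
have hst : stable nu Qs h.
  apply: NNPP => hn; case: hF => _ _ /(_ h hm hn); rewrite sh; lia.
case: hst => Q0 [hQ0 hQ]; exists Q0; split => // Q hQs hle.
have [x hx] := vfin hc.
rewrite (nuQE _ hQs) -sh.
have -> : [seq Tg g Q i | i <- iota 0 (size h)] = [seq oadd (Some x) (Tg h Q i) | i <- iota 0 (size h)].
  apply: eq_map => i; rewrite /Tg gE nderivnZ hornerZ vM hx oaddA //.
rewrite fm_oadd -(nuQE _ hQs) hQ // gE -mul_polyC nuM nuC hx //.
Qed.

Definition EV (P : {poly K} -> Prop) :=
  exists Q0, Qs Q0 /\ forall R, Qs R -> olt (nu Q0) (nu R) -> P R.

Lemma Qs_ex : exists Q, Qs Q.
Proof. by have [P hP] := hPsi_ex; have [Q [hQ _]] := hcof hP; exists Q. Qed.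
Lemma EV_true : EV (fun _ => True).
Proof. by have [Q hQ] := Qs_ex; exists Q. Qed.
Lemma EV_gt Q0 : Qs Q0 -> EV (fun R => olt (nu Q0) (nu R)).
Proof. by move=> h; exists Q0. Qed.
Lemma EV_of P : eventually nu Qs P -> EV P.
Proof. by case=> Q0 [h1 h2]; exists Q0; split => // R hR hl; apply: h2 => //; apply: olt_le. Qed.
Lemma EV_mono P P' : EV P -> (forall R, Qs R -> P R -> P' R) -> EV P'.
Proof. by case=> Q0 [h1 h2] h; exists Q0; split => // R hR hl; apply: h => //; apply: h2. Qed.
Lemma EV_and P1 P2 : EV P1 -> EV P2 -> EV (fun R => P1 R /\ P2 R).
Proof.
case=> Q1 [h1 e1] [Q2 [h2 e2]].
case/orP: (oleTot (nu Q1) (nu Q2)) => h.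
  exists Q2; split => // R hR hl; split; [apply: e1 => //; exact: ole_ltT h hl | exact: e2].
exists Q1; split => // R hR hl; split; [exact: e1 | apply: e2 => //; exact: ole_ltT h hl].
Qed.
Lemma EV_all (P : nat -> {poly K} -> Prop) n :
  (forall j, (j < n)%N -> EV (P j)) -> EV (fun R => forall j, (j < n)%N -> P j R).
Proof.
elim: n => [|n IH] h; first by have [Q hQ] := Qs_ex; exists Q; split => // R _ _ j.
have := EV_and (IH (fun j hj => h j (ltnW hj))) (h n (ltnSn n)).
move=> H; apply: (EV_mono H) => R _ [h1 h2] j; rewrite ltnS leq_eqVlt => /orP [/eqP ->|hj] //.
exact: h1.
Qed.
Lemma EV_ex P : EV P -> exists R, Qs R /\ P R.
Proof.
case=> Q0 [h1 h2]; have [R [hR hl]] := next h1.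
by exists R; split => //; apply: h2.
Qed.
Lemma notEV_wit P P' : ~ eventually nu Qs P -> EV P' -> exists R, [/\ Qs R, P' R & ~ P R].
Proof.
move=> hn [W [hW hP']]; have [W' [hW' hl]] := next hW.
apply: NNPP => hc; apply: hn; exists W'; split => // Q hQ hle.
apply: NNPP => hnp; apply: hc; exists Q; split => //.
by apply: hP' => //; apply: olt_leT hl hle.
Qed.

Local Notation above := (above_deltaL v nu Qs F).

Lemma not_above Q x : Qs Q -> Gam v x -> ole (Some x) (nuQ nu Q F) -> ~ above (Some x).
Proof. by move=> hQ hx hle /= [_]; apply; split => //; exists Q. Qed.

Lemma above_down a b : ole a b -> ~ above b ->
  (forall x, a = Some x -> Gam v x) -> (forall y, b = Some y -> Gam v y) -> ~ above a.
Proof.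
case: b => [y|] hab hb ha hb'; last by move=> _; apply: hb.
case: a hab ha => [x|] //= hxy ha [hx hnx]; apply: hb; split; first exact: hb'.
case=> _ [Q [hQ hQle]]; apply: hnx; split => //; exists Q; split => //.
exact: oleT hQle.
Qed.

Lemma TgF_Gam R j : Qs R -> forall x, Tg F R j = Some x -> Gam v x.
Proof. by move=> hR x; apply: Tg_Gam. Qed.

Lemma F_neq0 : F != 0.
Proof. by case: hF => hm _ _; apply: monic_neq0. Qed.

Lemma size_nderivn_lt j : (0 < j)%N -> (size (F^`N(j)) < size F)%N.
Proof.
move=> hj; apply: leq_ltn_trans (size_poly _ _) _.
have := size_poly_gt0 F; rewrite F_neq0; lia.
Qed.

Lemma J_EV k : Jset v nu Qs F k -> EV (fun R => above (Tg F R k)).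
Proof.
case=> _ hJ; apply: (EV_mono (EV_of hJ)) => R hR; by rewrite qterm2.
Qed.

Lemma main_pos k l : (0 < k)%N -> (k < l)%N -> Jset v nu Qs F k -> Bset v nu Qs F l ->
  ole (v ('C(l, k))%:R) (Some 0) -> False.
Proof.
move=> hk hkl hJ [hlb hB0] hC.
have hB : ~ eventually nu Qs (fun Q =>
     above (oadd (nu (qcoef Q F l)) (onat (nu Q) l))) by move=> e; apply: hB0.
have hJ' := J_EV hJ.
have hCf : exists z, v ('C(l, k))%:R = Some z.
  by move: hC; case: (v _) => [z|] // _; exists z.
case: hCf => z hz.
set g := F^`N(k).
have gl R : (g^`N(l - k)).[rt R] = (F^`N(l)).[rt R] * ('C(l, k))%:R.
  by rewrite /g nderivnN subnKC ?(ltnW hkl) // hornerMn mulr_natr.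
case: (eqVneq g 0) => hg.
  have [R [hR _ hn]] := notEV_wit hB EV_true.
  apply: hn; rewrite qterm2 //.
  have := gl R; rewrite hg nderivn_poly0 ?size_poly0 // horner0 => /esym /eqP.
  rewrite mulf_eq0 => /orP [/eqP e|/eqP e]; first by rewrite /Tg e v0.
  by move: hz; rewrite e v0.
have [Q0 [hQ0 hsv]] := stab_val (stable_small hg (size_nderivn_lt hk)) hg.
have [R [hR [hab hlt] hn]] := notEV_wit hB (EV_and hJ' (EV_gt hQ0)).
rewrite qterm2 // in hn.
have [e1 e2] := hsv R hR hlt.
have [c hc] := nu_fin hR.
have hle : ole (Tg F R k) (Tg F R l).
  have := e2 (l - k)%N; rewrite /Tg hc /= gl vM hz -/g -e1.
  case: (nu g) => [b|] //=; case: (v (F^`N(l)).[rt R]) => [y|] //= h.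
  have hz0 : oag_le z 0 by move: hC; rewrite hz.
  apply: leT (_ : oag_le _ (y + z + c *+ (l - k) + c *+ k)) _; first by rewrite leD2r.
  have -> : y + c *+ l = y + 0 + c *+ (l - k) + c *+ k.
    by rewrite addr0 -addrA -mulrnDr subnK // ltnW.
  by rewrite !leD2r leD2l.
apply: (above_down hle hn) => //.
  exact: TgF_Gam.
exact: TgF_Gam.
Qed.

Lemma olt_gap (x y : L) : olt (Some x) (Some y) -> oag_le 0 (y - x) /\ y - x != 0.
Proof.
rewrite /olt /= => /andP [h1 h2]; split; first by rewrite -le_sub0.
by rewrite subr_eq0; apply: contra h2 => /eqP ->.
Qed.

Lemma termv R U j : Qs R -> Qs U -> olt (nu R) (nu U) ->
  v ((F^`N(j)).[rt R] * (rt U - rt R) ^+ j) = Tg F R j.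
Proof.
move=> hR hU hl; have [c hc] := nu_fin hR.
have hd : v (rt U - rt R) = Some c.
  by rewrite dval ?hc -?hc //; apply: hQsPsi.
by rewrite vM (vX j hd) /Tg hc.
Qed.

Lemma NotJ0 : ~ Jset v nu Qs F 0.
Proof.
move=> hJ; have hJ' := J_EV hJ.
have hF0 := F_neq0.
set n := size F.
have n0 : (0 < n)%N by rewrite size_poly_gt0.
have ne : iota 0 n <> [::] by case: n n0.
have hEq : forall j, (j < n)%N -> EV (fun R => (0 < j)%N ->
    Tg F R j = oadd (nu (F^`N(j))) (onat (nu R) j)).
  move=> j hj; case: (posnP j) => [-> | hj0].
    by apply: (EV_mono EV_true).
  case: (eqVneq (F^`N(j)) 0) => hg.
    by apply: (EV_mono EV_true) => R hR _ _; rewrite /Tg hg horner0 v0 nu0.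
  have [Q0 [hQ0 hsv]] := stab_val (stable_small hg (size_nderivn_lt hj0)) hg.
  exists Q0; split => // R hR hl _; have [e1 _] := hsv R hR hl.
  by rewrite /Tg e1.
case: (EV_and hJ' (EV_all hEq)) => W [hW hWP].
pose big R := Qs R /\ olt (nu W) (nu R).
have bigQ R : big R -> Qs R by case.
have Hab R : big R -> above (Tg F R 0) by case=> hR hl; case: (hWP R hR hl).
have Heq R j : big R -> (0 < j)%N -> (j < n)%N ->
    Tg F R j = oadd (nu (F^`N(j))) (onat (nu R) j).
  by case=> hR hl hj hjn; case: (hWP R hR hl) => _ /(_ j hjn hj).
have Hfin R : big R -> exists m, nuQ nu R F = Some m /\ Gam v m.
  case=> hR hl; case e: (nuQ nu R F) => [m|]; last by exfalso; apply: (nuQ_fin hR hF0).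
  exists m; split => //; have [j _ ej] := @fm_att L (Tg F R) (iota 0 n) ne.
  by rewrite -(nuQE _ hR) e in ej; apply: (Tg_Gam hR (esym ej)).
have Hle R j : big R -> (j < n)%N -> ole (nuQ nu R F) (Tg F R j).
  by case=> hR _ hj; rewrite (nuQE _ hR); apply: fm_le; rewrite mem_iota.
have HA1 R : big R -> nuQ nu R F <> Tg F R 0.
  move=> hb e; have [m [em hm]] := Hfin R hb; have := Hab R hb; rewrite -e em.
  by apply: (not_above (bigQ R hb) hm); rewrite em oleR.
have HA2 R : big R -> exists j, [/\ (0 < j)%N, (j < n)%N & nuQ nu R F = Tg F R j].
  move=> hb; have [j hj ej] := @fm_att L (Tg F R) (iota 0 n) ne.
  rewrite -(nuQE _ (bigQ R hb)) in ej; rewrite mem_iota /= in hj.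
  rewrite add0n in hj; exists j; split => //.
  by rewrite lt0n; apply/eqP => e0; apply: (HA1 R hb); rewrite ej e0.
pose Pj j := [/\ (0 < j)%N, (j < n)%N & exists S, big S /\ nuQ nu S F = Tg F S j].
suff key : forall j0, Pj j0 -> False.
  have [S [hS hlS]] := next hW.
  have bS : big S by [].
  have [j [h1 h2 h3]] := HA2 S bS; apply: (key j); split => //; by exists S.
elim/ltn_ind => j0 IH [hj0 hj0n [S0 [hS0 eS0]]].
have [R1 [hR1 hl1]] := next (bigQ S0 hS0).
have bR1 : big R1 by split => //; apply: oltT hl1; case: hS0.
have [c0 hc0] := nu_fin (bigQ _ hS0); have [c1 hc1] := nu_fin hR1.
have [m0 [em0 _]] := Hfin S0 hS0.
have eT0 := Heq S0 j0 hS0 hj0 hj0n.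
rewrite em0 eT0 hc0 /= in eS0.
have [b0 hb0] : exists b0, nu (F^`N(j0)) = Some b0.
  by move: eS0; case: (nu _) => [b0|] // _; exists b0.
rewrite hb0 /= in eS0; case: eS0 => hm0.
have [g1 g2] : oag_le 0 (c1 - c0) /\ c1 - c0 != 0.
  by apply: olt_gap; rewrite -hc0 -hc1.
have Hi j : (j0 < j)%N -> (j < n)%N -> olt (Tg F R1 j0) (Tg F R1 j).
  move=> hj hjn.
  rewrite (Heq R1 j0 bR1 hj0 hj0n) (Heq R1 j bR1 _ hjn) ?hc1 ?hb0 /=; last by lia.
  have := Hle S0 j hS0 hjn; rewrite em0 (Heq S0 j hS0 _ hjn) ?hc0 /=; last by lia.
  case: (nu (F^`N(j))) => [b|] //= h.
  rewrite oltNge /=; rewrite hm0 in h.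
  by have := L2 h g1 g2 hj; rewrite [c0 + _]addrC subrK.
have [j1 [hj1 hj1n ej1]] := HA2 R1 bR1.
have emu : nuQ nu R1 F = Tg F R1 j0.
  case: (ltngtP j1 j0) => hcmp.
  - by exfalso; apply: (IH j1 hcmp); split => //; exists R1.
  - exfalso; have := Hi j1 hcmp hj1n; rewrite -ej1 => h.
    by have := Hle R1 j0 bR1 hj0n; rewrite oleNgt h.
  - by rewrite ej1 hcmp.
have uniq j : (j < n)%N -> j != j0 -> olt (Tg F R1 j0) (Tg F R1 j).
  move=> hjn hne; case: (ltngtP j j0) => hcmp.
  - case: (posnP j) => [e0|jp].
      rewrite e0 /olt -emu Hle //=; apply/eqP => e; apply: (HA1 R1 bR1); by rewrite e.
    rewrite /olt -emu Hle //=; apply/eqP => e; apply: (IH j hcmp); split => //.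
    by exists R1.
  - exact: Hi.
  - by rewrite hcmp eqxx in hne.
have [m1 [em1 gm1]] := Hfin R1 bR1.
have [U [hU hlU]] := next hR1.
have bU : big U by split => //; apply: oltT hlU; case: bR1.
have [cU hcU] := nu_fin hU.
have eU : Tg F U 0 = Tg F R1 j0.
  rewrite /Tg nderivn0 hcU /= mulr0n oadd0.
  rewrite (_ : rt U = rt R1 + (rt U - rt R1)); last by rewrite addrC subrK.
  rewrite nderiv_taylor; last by rewrite /GRing.comm mulrC.
  rewrite -/n (w_sum_uniq v0 v1 vM vD (F := fun j => (F^`N(j)).[rt R1] * (rt U - rt R1) ^+ j) hj0n).
  - by rewrite termv.
  - by rewrite termv // -emu em1.
  - by move=> j hjn hne; rewrite !termv //; apply: uniq.
have := Hab U bU; rewrite eU -emu em1.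
by apply: (not_above hR1 gm1); rewrite em1 oleR.
Qed.

Lemma olt_oadd0 a b : ole (Some 0) a -> olt (Some (0 : L)) b -> olt (Some 0) (oadd a b).
Proof.
case: a => [x|]; case: b => [y|] //= hx; rewrite !oltNge /= => hy.
apply/negP => h; move/negP: hy; apply.
apply: leT h; by rewrite -{1}[y]add0r leD2r.
Qed.

Lemma vC_le0 p m : prime p -> olt (Some 0) (v p%:R) -> ~~ (p %| m)%N ->
  ole (v m%:R) (Some 0).
Proof.
move=> hp hvp hnd; rewrite oleNgt; apply/negP => hvn.
have cop : coprime p m by rewrite prime_coprime.
case: (egcdnP m (prime_gt0 hp)) => km kn e _.
rewrite (eqP cop) in e.
have E : (1 : K) = km%:R * p%:R - kn%:R * m%:R.
  by rewrite -!natrM e natrD [X in X - _]addrC addrK.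
have h := vB (km%:R * p%:R) (kn%:R * m%:R); rewrite -E v1 in h.
have h1 : olt (Some 0) (v (km%:R * p%:R)) by rewrite vM; apply: olt_oadd0 => //; apply: vnat.
have h2 : olt (Some 0) (v (kn%:R * m%:R)) by rewrite vM; apply: olt_oadd0 => //; apply: vnat.
case: (omin_eq (v (km%:R * p%:R)) (v (kn%:R * m%:R))) => e2; rewrite e2 in h.
  by move: h1; rewrite oltNge h.
by move: h2; rewrite oltNge h.
Qed.
End Main.

Theorem mainTheorem19 (K : fieldType) (L : divOAG) (v : K -> option L)
  (p : nat) (nu : {poly K} -> option L) (Qs : {poly K} -> Prop)
  (F : {poly K}) :
  is_valuation v ->
  char_exp v p ->
  is_poly_valuation_ext v nu ->
  well_specified v nu ->
  (* m = 1 : Psi_1 nonempty, without element of maximal value *)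
  (exists Q, Psi nu 1 Q) ->
  (forall Q, Psi nu 1 Q -> exists R, Psi nu 1 R /\ olt (nu Q) (nu R)) ->
  (* Qs : subset of Psi_1, well-ordered by nu-values, cofinal *)
  (forall Q, Qs Q -> Psi nu 1 Q) ->
  (forall Q R, Qs Q -> Qs R -> nu Q = nu R -> Q = R) ->
  (forall S : {poly K} -> Prop, (forall Q, S Q -> Qs Q) -> (exists Q, S Q) ->
     exists Q0, S Q0 /\ forall Q, S Q -> ole (nu Q0) (nu Q)) ->
  (forall P, Psi nu 1 P -> exists Q, Qs Q /\ ole (nu P) (nu Q)) ->
  (* F limit key polynomial *)
  limit_key_poly nu Qs F ->
  (* Qs vertically unbounded *)
  ~ vert_bounded (gammaL v nu Qs) ->
  (* v(p) > H *)
  (forall h, invariance_group (Gam v) (gammaL v nu Qs) h ->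
     olt (Some h) (v p%:R)) ->
  forall k l, Jset v nu Qs F k -> Bset v nu Qs F l -> (k < l)%N ->
    (p %| 'C(l, k))%N.
Proof.
move=> hv hce hnu _ hPsi hnomax hQsPsi _ _ hcof hF _ _ k l hk hl hkl.
case: hce => [[hp hvp] | [-> _]]; last by rewrite dvd1n.
apply/idPn => hnd.
have hC := vC_le0 hv hnu hPsi hnomax hQsPsi hcof hF hp hvp hnd.
case: (posnP k) => [k0 | kpos].
  by move: hk; rewrite k0; apply: (NotJ0 hv hnu hPsi hnomax hQsPsi hcof hF).
exact: (main_pos hv hnu hPsi hnomax hQsPsi hcof hF kpos hkl hk hl hC).
Qed.
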